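(* Let $(X,\mathcal{T})$ be a finite topological space with furtherness function $\Psi$. The collection $\mathcal{B}^+=\{B^+(x,n)\mid x\in X,\ n\in\mathbb{N}\}$ of forward open balls $B^+(x,n)=\{y\in X\mid \Psi(x,y)<n\}$ is a basis for a topology on $X$, and this topology equals $\mathcal{T}$.
   Context: Here $\mathbb{N}=\{1,2,3,\dots\}$. For a finite topological space $X$ and $x\in X$, $U_x$ denotes the minimal open set containing $x$. A nested sequence of open sets around $x$ is a finite sequence $U_0\subsetneq U_1\subsetneq\cdots\subsetneq U_m=X$ of open sets with $U_0=U_x$ such that for each $j$ there is no open set $V$ with $U_j\subsetneq V\subsetneq U_{j+1}$. The furtherness function $\Psi:X\times X\to\{0,1,\dots,|X|-1\}$ is defined by: $\Psi(x,y)$ is the smallest integer $k\ge 0$ such that there exists a nested sequence $(U_j)_{j\ge0}$ of open sets around $x$ with $y\in U_k$. *)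

(* Defs.v *)
From mathcomp Require Import all_boot.
Set Implicit Arguments. Unset Strict Implicit. Unset Printing Implicit Defensive.

(* A finite topological space: a finType T with a family O of open sets
   containing set0, setT, closed under binary unions and intersections
   (equivalent to arbitrary unions/intersections since T is finite). *)
Definition is_topology (T : finType) (O : {set {set T}}) : Prop :=
  [/\ set0 \in O, setT \in O,
      (forall U V, U \in O -> V \in O -> U :|: V \in O) &
      (forall U V, U \in O -> V \in O -> U :&: V \in O)].

Definition Umin (T : finType) (O : {set {set T}}) (x : T) : {set T} :=
  \bigcap_(U in O | x \in U) U.

Definition nested_seq (T : finType) (O : {set {set T}}) (x : T)
    (s : seq {set T}) : Prop :=
  [/\ 0 < size s,
      nth set0 s 0 = Umin O x,
      last set0 s = setT,
      (forall U, U \in s -> U \in O) &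
      (forall j, j.+1 < size s ->
         nth set0 s j \proper nth set0 s j.+1 /\
         ~ (exists V, [/\ V \in O, nth set0 s j \proper V &
                          V \proper nth set0 s j.+1]))].

Definition is_furtherness (T : finType) (O : {set {set T}})
    (Psi : T -> T -> nat) : Prop :=
  forall x y,
    (exists s, [/\ nested_seq O x s, Psi x y < size s &
                   y \in nth set0 s (Psi x y)]) /\
    (forall s k, nested_seq O x s -> k < size s -> y \in nth set0 s k ->
       Psi x y <= k).

Definition fball (T : finType) (Psi : T -> T -> nat) (x : T) (n : nat)
  : {set T} := [set y | Psi x y < n].

(* B is a member of the family B^+ = {B^+(x,n) | x in X, n in N = {1,2,..}} *)
Definition in_fballs (T : finType) (Psi : T -> T -> nat) (B : {set T})
  : Prop := exists x n, 0 < n /\ B = fball Psi x n.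

Definition is_basis (T : finType) (Bs : {set T} -> Prop) : Prop :=
  (forall x : T, exists B, Bs B /\ x \in B) /\
  (forall B1 B2 x, Bs B1 -> Bs B2 -> x \in B1 :&: B2 ->
     exists B3, [/\ Bs B3, x \in B3 & B3 \subset B1 :&: B2]).

Definition generated_open (T : finType) (Bs : {set T} -> Prop) (U : {set T})
  : Prop := forall x, x \in U -> exists B, [/\ Bs B, x \in B & B \subset U].

(* Main.v *)
Require Import Defs.
From mathcomp Require Import all_boot.

Section H.
Variables (T : finType) (O : {set {set T}}).
Hypothesis hO : is_topology O.

Lemma Umin_open x : Umin O x \in O.
Proof.
case: hO => _ hT _ hI; rewrite /Umin.
apply: (big_ind (fun U => U \in O)) => //; by move=> U /andP[].
Qed.

Lemma Umin_in x : x \in Umin O x.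
Proof. by apply/bigcapP => U /andP[]. Qed.

Lemma Umin_sub {U x} : U \in O -> x \in U -> Umin O x \subset U.
Proof. by move=> hU hx; apply: bigcap_inf; rewrite hU hx. Qed.

Lemma open_local (A : {set T}) :
  (forall y, y \in A -> Umin O y \subset A) -> A \in O.
Proof.
move=> h.
have -> : A = \bigcup_(y in A) Umin O y.
  apply/setP => z; apply/idP/bigcupP.
    by move=> hz; exists z => //; apply: Umin_in.
  by case=> y hy hz; apply: (subsetP (h y hy)).
case: hO => h0 _ hU _.
apply: (big_ind (fun U => U \in O)) => // i _; exact: Umin_open.
Qed.

Lemma fball_open Psi x n : is_furtherness O Psi -> fball Psi x n \in O.
Proof.
move=> hPsi; apply: open_local => y; rewrite inE => hy.
have [[s [hs hsz hys]] _] := hPsi x y.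
have [_ _ _ hsO _] := hs.
have hk : nth set0 s (Psi x y) \in O by apply: hsO; apply: mem_nth.
apply: subset_trans (Umin_sub hk hys) _.
apply/subsetP => z hz; rewrite inE.
have [_ h2] := hPsi x z.
exact: leq_ltn_trans (h2 _ _ hs hsz hz) hy.
Qed.

End H.

Theorem mainTheorem11 (T : finType) (O : {set {set T}}) (Psi : T -> T -> nat)
    (hO : is_topology O) (hPsi : is_furtherness O Psi) :
  is_basis (in_fballs Psi) /\
  (forall U : {set T}, U \in O <-> generated_open (in_fballs Psi) U).
Proof.
have hB1 x : fball Psi x 1 \subset Umin O x.
  apply/subsetP => y; rewrite inE ltnS leqn0 => /eqP h.
  have [[s [hs _ hys]] _] := hPsi x y.
  by case: hs => _ h0 _ _ _; rewrite h h0 in hys.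
have hxx x : x \in fball Psi x 1.
  have [[s [hs hsz _]] h2] := hPsi x x.
  rewrite inE ltnS leqn0; apply/eqP; apply/eqP; rewrite -leqn0.
  have [hsz' h0 _ _ _] := hs.
  apply: (h2 _ _ hs hsz').
  by rewrite h0; apply: Umin_in.
have hB1in x : in_fballs Psi (fball Psi x 1) by exists x, 1.
have hopen B : in_fballs Psi B -> B \in O.
  by case=> y [n [_ ->]]; apply: fball_open.
split; first split.
- by move=> x; exists (fball Psi x 1); split.
- move=> B1 B2 x h1 h2 hx; exists (fball Psi x 1); split => //.
  apply: subset_trans (hB1 x) _.
  case: hO => _ _ _ hI.
  by apply: Umin_sub => //; apply: hI; apply: hopen.
move=> U; split.
- move=> hU x hx; exists (fball Psi x 1); split => //.
  exact: subset_trans (hB1 x) (Umin_sub _ _ hU hx).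
- move=> hg; apply: (open_local _ _ hO) => y hy.
  have [B [hB hyB hBU]] := hg y hy.
  exact: subset_trans (Umin_sub _ _ (hopen B hB) hyB) hBU.
Qed.
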